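(* Let $n\ge2$ (prime or composite), $d\ge1$, $\alpha>1$, positive weights $\boldsymbol\gamma=\{\gamma_u\}$ with $\gamma_\emptyset=1$, $M>0$, and $\mathbf z\in\mathbb Z^d$. Then $$\Sigma_T\le M\,|\mathcal A_d(M)|\,S_{n,d,\alpha,\boldsymbol\gamma}(\mathbf z).$$ Moreover, if $\alpha>2$ then $$\Sigma_T\le M\,\big[S_{n,d,\alpha/2,\sqrt{\boldsymbol\gamma}}(\mathbf z)\big]^2.$$
   Context: Weights $\gamma_u>0$ for finite $u\subset\mathbb N$, $\gamma_\emptyset=1$; $\sqrt{\boldsymbol\gamma}$ denotes the weights $\{\gamma_u^{1/2}\}$. For smoothness $a>0$ and weights $\boldsymbol\beta$, and $\mathbf h\in\mathbb Z^d$: $\mathrm{supp}(\mathbf h)=\{j:h_j\ne0\}$, $r_{d,a,\boldsymbol\beta}(\mathbf h)=\beta_{\mathrm{supp}(\mathbf h)}^{-1}\prod_{j\in\mathrm{supp}(\mathbf h)}|h_j|^a$; write $r=r_{d,\alpha,\boldsymbol\gamma}$. $\mathcal A_d(M)=\{\mathbf h\in\mathbb Z^d:r(\mathbf h)\le M\}$. $$S_{n,d,a,\boldsymbol\beta}(\mathbf z)=\sum_{\mathbf h\in\mathbb Z^d}\frac1{r_{d,a,\boldsymbol\beta}(\mathbf h)}\sum_{\substack{\boldsymbol\ell\in\mathbb Z^d\setminus\{\mathbf0\}\\ \boldsymbol\ell\cdot\mathbf z\equiv0\ (\mathrm{mod}\ n)}}\frac1{r_{d,a,\boldsymbol\beta}(\mathbf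 h+\boldsymbol\ell)},$$ $$\Sigma_T:=\sum_{\mathbf h\in\mathcal A_d(M)}\sum_{\substack{\mathbf p\in\mathcal A_d(M)\\(\mathbf p-\mathbf h)\cdot\mathbf z\equiv0\ (\mathrm{mod}\ n)}}\sum_{\substack{\boldsymbol\ell\in\mathbb Z^d\setminus\{\mathbf0,\mathbf p-\mathbf h\}\\ \boldsymbol\ell\cdot\mathbf z\equiv0\ (\mathrm{mod}\ n)}}\frac1{r(\mathbf h+\boldsymbol\ell)}.$$ *)

(* Defs.v *)
From mathcomp Require Import all_boot all_order all_algebra.
From mathcomp Require Import all_classical all_reals all_analysis.
Set Implicit Arguments. Unset Strict Implicit. Unset Printing Implicit Defensive.
Import Order.TTheory GRing.Theory Num.Theory.
Local Open Scope classical_set_scope.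
Local Open Scope ring_scope.

(* lattice points of Z^d are row vectors 'rV[int]_d ; coordinate j is h ord0 j *)
Definition ivec (d : nat) := 'rV[int]_d.

Definition supp (d : nat) (h : ivec d) : {set 'I_d} := [set j | h ord0 j != 0].

(* r_{d,a,beta}(h) = beta_{supp h}^{-1} * prod_{j in supp h} |h_j|^a
   (weights beta_u only matter for u subset of {1..d}, here indexed by 'I_d) *)
Definition rfun (R : realType) (d : nat) (a : R) (beta : {set 'I_d} -> R)
    (h : ivec d) : R :=
  (beta (supp h))^-1 * \prod_(j in supp h) ((`|h ord0 j|%:~R : R) `^ a).

Definition dotz (d : nat) (l z : ivec d) : int := \sum_(j < d) l ord0 j * z ord0 j.

Definition congz (n : nat) (d : nat) (l z : ivec d) : Prop :=
  (dotz l z = 0 %[mod n%:Z])%Z.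

Definition Aset (R : realType) (d : nat) (alpha : R) (gamma : {set 'I_d} -> R)
    (M : R) : set (ivec d) := [set h | rfun alpha gamma h <= M].

Definition Sinner (R : realType) (n d : nat) (a : R) (beta : {set 'I_d} -> R)
    (z h : ivec d) : \bar R :=
  \esum_(l in [set l : ivec d | l != 0 /\ congz n l z])
     ((rfun a beta (h + l))^-1)%:E.

Definition Ssum (R : realType) (n d : nat) (a : R) (beta : {set 'I_d} -> R)
    (z : ivec d) : \bar R :=
  \esum_(h in [set: ivec d])
     (((rfun a beta h)^-1)%:E * Sinner n a beta z h)%E.

Definition SigmaT (R : realType) (n d : nat) (alpha : R)
    (gamma : {set 'I_d} -> R) (M : R) (z : ivec d) : \bar R :=
  \esum_(h in Aset alpha gamma M)
   \esum_(p in [set p | Aset alpha gamma M p /\ congz n (p - h) z])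
    \esum_(l in [set l : ivec d | l != 0 /\ l != p - h /\ congz n l z])
       ((rfun alpha gamma (h + l))^-1)%:E.

(* |A_d(M)| as a (possibly infinite) extended real: counting *)
Definition cardA (R : realType) (d : nat) (alpha : R) (gamma : {set 'I_d} -> R)
    (M : R) : \bar R :=
  \esum_(h in Aset alpha gamma M) (1%:E : \bar R).

(* Main.v *)
Require Import Defs.
From mathcomp Require Import all_boot all_order all_algebra.
From mathcomp Require Import all_classical all_reals all_analysis.
From mathcomp Require Import ring lra.
Import Order.TTheory GRing.Theory Num.Theory.
Local Open Scope classical_set_scope.
Local Open Scope ring_scope.

Section Helpers.
Variable R : realType.
Local Open Scope ereal_scope.

Lemma esumZle (T : choiceType) (I : set T) (c : \bar R) (a : T -> \bar R) :
  0 <= c -> (forall i, I i -> 0 <= a i) ->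
  \esum_(i in I) (c * a i) <= c * \esum_(i in I) a i.
Proof.
move=> c0 a0; rewrite ge_ereal_sup => //= _ [X [finX XI]] <-.
rewrite fsbig_finite// big_seq -ge0_sume_distrr; last first.
  by move=> i; rewrite in_fset_set// inE => /XI/a0.
apply: lee_wpmul2l => //; rewrite -big_seq -fsbig_finite//.
by apply: ereal_sup_ubound; exists X.
Qed.

Lemma esum_subset (T : choiceType) (I J : set T) (a : T -> \bar R) :
  I `<=` J -> \esum_(i in I) a i <= \esum_(i in J) a i.
Proof.
move=> IJ; rewrite ge_ereal_sup => //= _ [X [finX XI]] <-.
by apply: esum_ge; exists X => //; split => //; exact: subset_trans IJ.
Qed.
End Helpers.
Arguments esumZle {R T I c a}.
Arguments esum_subset {R T I J a}.

Lemma rfun_gt0 (R : realType) d (a : R) (beta : {set 'I_d} -> R) (h : ivec d) :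
  (forall u, 0 < beta u) -> 0 < rfun a beta h.
Proof.
move=> b0; rewrite /rfun mulr_gt0 ?invr_gt0//.
apply: prodr_gt0 => j; rewrite inE => hj; apply: powR_gt0.
by rewrite ltr0z normr_gt0.
Qed.

Lemma rfun_sq (R : realType) d (a : R) (beta : {set 'I_d} -> R) (h : ivec d) :
  (forall u, 0 < beta u) ->
  rfun (a / 2) (fun u => Num.sqrt (beta u)) h ^+ 2 = rfun a beta h.
Proof.
move=> b0; rewrite /rfun exprMn exprVn sqr_sqrtr ?ltW//; congr (_ * _).
rewrite -prodrXl; apply: eq_bigr => j _.
by rewrite -powR_mulrn ?powR_ge0// -powRrM divfK.
Qed.

Lemma dotzB d (a b z : ivec d) : dotz (a - b) z = dotz a z - dotz b z.
Proof. by rewrite /dotz -sumrB; apply: eq_bigr => j _; rewrite !mxE mulrBl. Qed.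

Lemma congzB n d (a b z : ivec d) : congz n a z -> congz n b z -> congz n (a - b) z.
Proof.
rewrite /congz mod0z dotzB => /dvdz_mod0P ha /dvdz_mod0P hb.
by apply/dvdz_mod0P; rewrite rpredB.
Qed.

Lemma addsubK d (h l p : ivec d) : h + l + (p - h - l) = p.
Proof. by rewrite -(addrA p) -opprD [_ + (p - _)]addrC subrK. Qed.
Lemma keyR (R : realType) (M x y w : R) : 0 < M -> 0 < x -> 0 < y -> 0 < w ->
  1 <= M * x^+2 -> 1 <= M * y^+2 -> w^+2 <= M * (x * w * (w * y)).
Proof.
move=> M0 x0 y0 w0 hx hy.
have h1 : 1 <= M * x * y.
  have hp : 0 < M * x * y by rewrite !mulr_gt0.
  have : 1 <= (M * x * y) ^+ 2.
    have -> : (M * x * y) ^+ 2 = (M * x ^+ 2) * (M * y ^+ 2) by rewrite !expr2; ring.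
    by rewrite -[1](mulr1 1); apply: ler_pM.
  move: hp; set t := M * x * y => hp ht; nra.
have -> : M * (x * w * (w * y)) = (M * x * y) * w ^+ 2 by rewrite expr2; ring.
by rewrite ler_peMl // sqr_ge0.
Qed.

Theorem lemma7 (R : realType) (n d : nat) (alpha M : R)
    (gamma : {set 'I_d} -> R) (z : ivec d) :
  (2 <= n)%N -> (1 <= d)%N -> 1 < alpha ->
  (forall u, 0 < gamma u) -> gamma finset.set0 = 1 -> 0 < M ->
  (SigmaT n alpha gamma M z <= M%:E * cardA alpha gamma M * Ssum n alpha gamma z)%E /\
  (2 < alpha ->
   (SigmaT n alpha gamma M z <=
      M%:E * (Ssum n (alpha / 2) (fun u => Num.sqrt (gamma u)) z) ^+ 2)%E).
Proof.
move=> n2 d1 a1 g0 gs0 M0.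
set A := Aset alpha gamma M.
set F := fun x : ivec d => ((rfun alpha gamma x)^-1)%:E.
have rgt0 x : 0 < rfun alpha gamma x by apply: rfun_gt0.
have Fge0 x : (0 <= F x)%E by rewrite lee_fin invr_ge0 ltW.
have Sge0 h : (0 <= Sinner n alpha gamma z h)%E by apply: esum_ge0 => l _; exact: Fge0.
have MF h : A h -> 1 <= M * (rfun alpha gamma h)^-1.
  move=> Ah; rewrite -(mulfV (lt0r_neq0 (rgt0 h))).
  by apply: ler_wpM2r; [rewrite invr_ge0 ltW|].
split.
  have cA0 : (0 <= cardA alpha gamma M)%E by apply: esum_ge0.
  have S1 : (\esum_(h in A) Sinner n alpha gamma z h <= M%:E * Ssum n alpha gamma z)%E.
    apply: (@le_trans _ _ (\esum_(h in A) (M%:E * (F h * Sinner n alpha gamma z h)))%E).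
      apply: le_esum => h Ah; rewrite muleA -EFinM.
      rewrite -{1}(mul1e (Sinner n alpha gamma z h)); apply: lee_wpmul2r => //.
      by rewrite lee_fin; apply: MF.
    have M0' : (0 <= M%:E)%E by rewrite lee_fin ltW.
    apply: (le_trans (esumZle M0' _)); first by move=> h _; apply: mule_ge0.
    apply: lee_wpmul2l; first by rewrite lee_fin ltW.
    exact: esum_subset.
  apply: (@le_trans _ _ (\esum_(h in A) \esum_(p in A) Sinner n alpha gamma z h)%E).
    apply: le_esum => h Ah.
    apply: (@le_trans _ _ (\esum_(p in [set p | A p /\ congz n (p - h)%R z]) Sinner n alpha gamma z h)%E).
      apply: le_esum => p _; apply: esum_subset => l /= [l0 [_ c]]; by split.
    by apply: esum_subset => p [].
  apply: (@le_trans _ _ (\esum_(h in A) (cardA alpha gamma M * Sinner n alpha gamma z h))%E).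
    apply: le_esum => h _; rewrite muleC.
    rewrite (eq_esum (b := fun p => (Sinner n alpha gamma z h * 1)%E)); last by move=> p _; rewrite mule1.
    exact: esumZle.
  apply: (le_trans (esumZle cA0 _)) => //.
  rewrite [(M%:E * _)%E]muleC -muleA.
  by rewrite lee_wpmul2l.
move=> a2.
have M0' : (0 <= M%:E)%E by rewrite lee_fin ltW.
have sg0 u : 0 < Num.sqrt (gamma u) by rewrite sqrtr_gt0.
set G := fun x : ivec d => ((rfun (alpha / 2) (fun u => Num.sqrt (gamma u)) x)^-1)%:E.
have Ggt0 x : 0 < rfun (alpha / 2) (fun u => Num.sqrt (gamma u)) x by exact: (@rfun_gt0 R d (alpha / 2) _ x sg0).
have Gge0 x : (0 <= G x)%E by rewrite lee_fin invr_ge0 ltW.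
set K := fun (h p l : ivec d) => (G h * G (h + l)%R * (G (h + l)%R * G p))%E.
have Kge0 h p l : (0 <= K h p l)%E by rewrite /K !mule_ge0.
have key h p l : A h -> A p -> (F (h + l)%R <= M%:E * K h p l)%E.
  move=> Ah Ap; have := MF h Ah; have := MF p Ap.
  rewrite /K /G /F -!EFinM lee_fin -!(@rfun_sq R d alpha gamma _ g0) -!exprVn => hp hh.
  by apply: keyR; rewrite ?invr_gt0.
set P := fun h : ivec d => [set p | A p /\ congz n (p - h)%R z].
set L' := fun h p : ivec d => [set l : ivec d | l != 0 /\ l != (p - h)%R /\ congz n l z].
have step1 : (SigmaT n alpha gamma M z <= M%:E *
    \esum_(h in A) \esum_(p in P h) \esum_(l in L' h p) K h p l)%E.
  rewrite /SigmaT.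
  apply: (@le_trans _ _ (\esum_(h in A) \esum_(p in P h) \esum_(l in L' h p) (M%:E * K h p l))%E).
    apply: le_esum => h Ah; apply: le_esum => p [Ap _]; apply: le_esum => l _; exact: key.
  apply: (@le_trans _ _ (\esum_(h in A) \esum_(p in P h) (M%:E * \esum_(l in L' h p) K h p l))%E).
    apply: le_esum => h _; apply: le_esum => p _; exact: (esumZle M0' (fun l _ => Kge0 h p l)).
  apply: (@le_trans _ _ (\esum_(h in A) (M%:E * \esum_(p in P h) \esum_(l in L' h p) K h p l))%E).
    apply: le_esum => h _; apply: esumZle M0' _ => p _; apply: esum_ge0 => l _; exact: Kge0.
  apply: esumZle M0' _ => h _; apply: esum_ge0 => p _; apply: esum_ge0 => l _; exact: Kge0.
apply: (le_trans step1); rewrite lee_wpmul2l //.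
set L := [set l : ivec d | l != 0 /\ congz n l z].
set a := fun x : ivec d * ivec d => (G x.1 * G (x.1 + x.2)%R)%E.
have age0 x : (0 <= a x)%E by rewrite /a mule_ge0.
set E1 := [set: ivec d] `*`` (fun=> L).
set e := fun q : ivec d * (ivec d * ivec d) =>
  ((q.1, q.2.2), ((q.1 + q.2.2)%R, (q.2.1 - q.1 - q.2.2)%R)).
set D := A `*`` (fun h => P h `*`` L' h).
have E2 : (\esum_(h in A) \esum_(p in P h) \esum_(l in L' h p) K h p l =
    \esum_(q in D) a (e q).1 * a (e q).2)%E.
  rewrite (eq_esum (b := fun h => \esum_(k in P h `*`` L' h) K h k.1 k.2)); last first.
    by move=> h _; apply: esum_esum => p l _ _; exact: Kge0.
  rewrite (esum_esum (a := fun h k => K h k.1 k.2)); last by move=> *; exact: Kge0.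
  apply: eq_esum => -[h [p l]] _; rewrite /K /a /e /= addsubK.
  by rewrite muleA.
rewrite E2 -(esum_image D e (fun y => a y.1 * a y.2)%E); last first.
  move=> [h1 [p1 l1]] [h2 [p2 l2]] _ _ /= [-> -> _ /addIr/addIr ->].
  by [].
apply: (@le_trans _ _ (\esum_(y in E1 `*`` fun=> E1) a y.1 * a y.2)%E).
  apply: esum_subset => _ [[h [p l]] [Ah [[Ap cp] [l0 [lp cl]]]] <-]; rewrite /e /=.
  split; split => //=; split.
  - by apply: contra lp => /eqP/subr0_eq ->.
  - by apply: congzB.
rewrite -(esum_esum (I := E1) (J := fun=> E1) (a := fun x y => a x * a y)%E); last first.
  by move=> *; apply: mule_ge0.
apply: (@le_trans _ _ (\esum_(x in E1) (a x * \esum_(y in E1) a y))%E).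
  by apply: le_esum => x _; apply: esumZle.
rewrite (eq_esum (b := fun x => (\esum_(y in E1) a y) * a x)%E); last by move=> x _; rewrite muleC.
apply: (le_trans (esumZle _ _)) => //; first exact: esum_ge0.
rewrite -expe2 lee_sqr; last 2 first.
- exact: esum_ge0.
- by rewrite /Ssum; apply: esum_ge0 => h _; apply: mule_ge0; [exact: Gge0 | apply: esum_ge0 => l _; exact: Gge0].
rewrite -(esum_esum (I := [set: ivec d]) (J := fun=> L) (a := fun h l => a (h, l))); last by [].
rewrite /Ssum; apply: le_esum => h _; rewrite /a /=; apply: (esumZle (Gge0 h)) => l _; exact: Gge0.
Qed.
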